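(* Let $\varphi=\mathrm{vec}(A)$, $\varphi_0=\mathrm{vec}(A_0)$ with $A,A_0\in\mathbb{R}^{(p-r)\times r}$, $\|A\|_2<1$, $\|A_0\|_2<1$. If $$\|\sin\Theta\{U(\varphi),U(\varphi_0)\}\|_F\le\frac{(1-\|A_0\|_2^2)^2}{8(1+\|A_0\|_2^2)^2},$$ then $$\|\varphi-\varphi_0\|_2\le\sqrt2\Big\{1+\frac{32\sqrt2(1+\|A_0\|_2^2)^2}{(1-\|A_0\|_2^2)^2}\Big\}\|\sin\Theta\{U(\varphi),U(\varphi_0)\}\|_F .$$ Moreover, for all such $\varphi,\varphi_0$, $\|\sin\Theta\{U(\varphi),U(\varphi_0)\}\|_F\le4\|\varphi-\varphi_0\|_2$.
   Context: Fix $1\le r\le p$. For $A\in\mathbb{R}^{(p-r)\times r}$, $\varphi=\mathrm{vec}(A)$, $X_\varphi=\begin{bmatrix}0_{r\times r}&-A^{T}\\ A&0\end{bmatrix}$, $I_{p\times r}=\begin{bmatrix}I_r\\0\end{bmatrix}$, and $U(\varphi)=(I_p+X_\varphi)(I_p-X_\varphi)^{-1}I_{p\times r}\in\mathbb{O}(p,r)$ (Cayley parameterization; $\mathbb{O}(p,r)$ = $p\times r$ matrices with orthonormal columns). For $U,V\in\mathbb{O}(p,r)$ with singular values $\sigma_1\ge\dots\ge\sigma_r$ of $U^TV$, the canonical angles are $\theta_i=\arccos\sigma_i$ and $\|\sin\Theta(U,V)\|_F=(\sum_{i=1}^r\sin^2\theta_i)^{1/2}$. *)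

(* Defs.v *)
From HB Require Import structures.
From mathcomp Require Import all_boot all_order all_algebra.
From mathcomp Require Import all_classical all_reals all_analysis.
Set Implicit Arguments. Unset Strict Implicit. Unset Printing Implicit Defensive.
Import Order.TTheory GRing.Theory Num.Theory.
Local Open Scope classical_set_scope.
Local Open Scope ring_scope.

Section Defs.
Variable R : realType.

Definition eucl n (v : 'cV[R]_n) : R := Num.sqrt (\sum_i v i 0 ^+ 2).

(* vec(A): column-major stacking of the columns of A into a column vector *)
Definition vecm m n (A : 'M[R]_(m, n)) : 'cV[R]_(n * m) := (mxvec A^T)^T.

Definition opnorm m n (A : 'M[R]_(m, n)) : R :=
  sup [set eucl (A *m x) | x in [set x : 'cV[R]_n | eucl x = 1]].

(* Cayley parameterization, with p = r + q, q = p - r *)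
Definition Xphi r q (A : 'M[R]_(q, r)) : 'M[R]_(r + q) :=
  block_mx 0 (- A^T) A 0.
Definition Ipr r q : 'M[R]_(r + q, r) := col_mx 1%:M 0.
Definition Ucay r q (A : 'M[R]_(q, r)) : 'M[R]_(r + q, r) :=
  (1%:M + Xphi A) *m invmx (1%:M - Xphi A) *m Ipr r q.

Definition is_singular_values n (M : 'M[R]_n) (s : 'I_n -> R) : Prop :=
  (forall i, 0 <= s i) /\ (forall i j : 'I_n, (i <= j)%N -> s j <= s i) /\
  exists P Q : 'M[R]_n, P^T *m P = 1%:M /\ Q^T *m Q = 1%:M /\
    M = P *m diag_mx (\row_i s i) *m Q^T.

(* || sin Theta ||_F computed from singular values s of U^T V, theta_i = acos s_i *)
Definition sinThetaF n (s : 'I_n -> R) : R :=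
  Num.sqrt (\sum_i (sin (acos (s i))) ^+ 2).

End Defs.

(* Main.v *)
Require Import Defs.
From HB Require Import structures.
From mathcomp Require Import all_boot all_order all_algebra.
From mathcomp Require Import all_classical all_reals all_analysis.
From mathcomp Require Import ring lra.
Set Implicit Arguments. Unset Strict Implicit. Unset Printing Implicit Defensive.
Import Order.TTheory GRing.Theory Num.Theory.
Local Open Scope ring_scope.


Section IP.
Variable R : realType.

Definition ip m n (X Y : 'M[R]_(m, n)) : R := \sum_i \sum_j X i j * Y i j.

Lemma ipE m n (X Y : 'M[R]_(m, n)) : ip X Y = \tr (X^T *m Y).
Proof.
rewrite /ip /mxtrace exchange_big; apply: eq_bigr => j _.
rewrite mxE; apply: eq_bigr => i _; by rewrite mxE.
Qed.

Lemma ipC m n (X Y : 'M[R]_(m, n)) : ip X Y = ip Y X.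
Proof. by apply: eq_bigr => i _; apply: eq_bigr => j _; rewrite mulrC. Qed.

Lemma ipDl m n (X Y Z : 'M[R]_(m, n)) : ip (X + Y) Z = ip X Z + ip Y Z.
Proof.
rewrite /ip -big_split; apply: eq_bigr => i _; rewrite -big_split.
by apply: eq_bigr => j _; rewrite mxE mulrDl.
Qed.

Lemma ipZl m n a (X Y : 'M[R]_(m, n)) : ip (a *: X) Y = a * ip X Y.
Proof.
rewrite /ip mulr_sumr; apply: eq_bigr => i _; rewrite mulr_sumr.
by apply: eq_bigr => j _; rewrite mxE mulrA.
Qed.

Lemma ipNl m n (X Y : 'M[R]_(m, n)) : ip (- X) Y = - ip X Y.
Proof. by rewrite -scaleN1r ipZl mulN1r. Qed.

Lemma ipBl m n (X Y Z : 'M[R]_(m, n)) : ip (X - Y) Z = ip X Z - ip Y Z.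
Proof. by rewrite ipDl ipNl. Qed.

Lemma ipDr m n (X Y Z : 'M[R]_(m, n)) : ip Z (X + Y) = ip Z X + ip Z Y.
Proof. by rewrite ipC ipDl !(ipC Z). Qed.
Lemma ipZr m n a (X Y : 'M[R]_(m, n)) : ip Y (a *: X) = a * ip Y X.
Proof. by rewrite ipC ipZl ipC. Qed.
Lemma ipNr m n (X Y : 'M[R]_(m, n)) : ip Y (- X) = - ip Y X.
Proof. by rewrite ipC ipNl ipC. Qed.
Lemma ipBr m n (X Y Z : 'M[R]_(m, n)) : ip Z (X - Y) = ip Z X - ip Z Y.
Proof. by rewrite ipDr ipNr. Qed.

Lemma ip_ge0 m n (X : 'M[R]_(m, n)) : 0 <= ip X X.
Proof. by apply: sumr_ge0 => i _; apply: sumr_ge0 => j _; rewrite -expr2 sqr_ge0. Qed.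

Lemma ip_tr m n (X Y : 'M[R]_(m, n)) : ip X^T Y^T = ip X Y.
Proof.
rewrite /ip exchange_big; apply: eq_bigr => i _; apply: eq_bigr => j _.
by rewrite !mxE.
Qed.

Lemma ip_mull m n k (A : 'M[R]_(m, n)) (X : 'M[R]_(n, k)) Y :
  ip (A *m X) Y = ip X (A^T *m Y).
Proof. by rewrite !ipE trmx_mul mulmxA. Qed.

Lemma ip_mulr m n k (B : 'M[R]_(n, k)) (X : 'M[R]_(m, n)) Y :
  ip (X *m B) Y = ip X (Y *m B^T).
Proof. by rewrite !ipE trmx_mul -mulmxA mxtrace_mulC mulmxA. Qed.

Lemma ip_sqr m n (X Y : 'M[R]_(m, n)) :
  ip (X + Y) (X + Y) = ip X X + 2 * ip X Y + ip Y Y.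
Proof. rewrite !ipDl !ipDr (ipC Y X); ring. Qed.

Lemma ip_sqrB m n (X Y : 'M[R]_(m, n)) :
  ip (X - Y) (X - Y) = ip X X - 2 * ip X Y + ip Y Y.
Proof. rewrite !ipBl !ipBr (ipC Y X); ring. Qed.

Lemma ip_CS m n (X Y : 'M[R]_(m, n)) : ip X Y ^+ 2 <= ip X X * ip Y Y.
Proof.
have H t : 0 <= ip X X - 2 * t * ip X Y + t ^+ 2 * ip Y Y.
  have := ip_ge0 (X - t *: Y); rewrite ip_sqrB ipZr ipZr ipZl; nra.
have hX := ip_ge0 X; have hY := ip_ge0 Y.
have [y0|ypos] := eqVneq (ip Y Y) 0.
  rewrite y0 mulr0.
  have [q0|qn] := eqVneq (ip X Y) 0; first by rewrite q0 expr0n.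
  have := H ((ip X X + 1) / (2 * ip X Y)); rewrite y0 mulr0 addr0.
  have -> : 2 * ((ip X X + 1) / (2 * ip X Y)) * ip X Y = ip X X + 1.
    by field; rewrite qn /=.
  lra.
have yp : 0 < ip Y Y by rewrite lt_neqAle eq_sym ypos hY.
have := H (ip X Y / ip Y Y).
have -> : ip X X - 2 * (ip X Y / ip Y Y) * ip X Y + (ip X Y / ip Y Y) ^+ 2 * ip Y Y
   = (ip X X * ip Y Y - ip X Y ^+ 2) / ip Y Y by field; rewrite ypos.
by rewrite pmulr_lge0 ?invr_gt0 // subr_ge0.
Qed.

Definition nf m n (X : 'M[R]_(m, n)) := Num.sqrt (ip X X).

Lemma nf_ge0 m n (X : 'M[R]_(m, n)) : 0 <= nf X.
Proof. exact: sqrtr_ge0. Qed.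
Lemma nf_sq m n (X : 'M[R]_(m, n)) : nf X ^+ 2 = ip X X.
Proof. by rewrite sqr_sqrtr // ip_ge0. Qed.

Lemma ip_le_nf m n (X Y : 'M[R]_(m, n)) : ip X Y <= nf X * nf Y.
Proof.
have h := ip_CS X Y; rewrite -!nf_sq -exprMn in h.
have := mulr_ge0 (nf_ge0 X) (nf_ge0 Y); move: h; set p := nf X * nf Y; set z := ip X Y; nra.
Qed.

Lemma nf_triangle m n (X Y : 'M[R]_(m, n)) : nf (X + Y) <= nf X + nf Y.
Proof.
have h : nf (X + Y) ^+ 2 <= (nf X + nf Y) ^+ 2.
  rewrite nf_sq ip_sqr -!nf_sq; have := ip_le_nf X Y; nra.
have := nf_ge0 X; have := nf_ge0 Y; have := nf_ge0 (X + Y); nra.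
Qed.

Lemma nf_le m n k l (X : 'M[R]_(m, n)) (Y : 'M[R]_(k, l)) :
  ip X X <= ip Y Y -> nf X <= nf Y.
Proof. by move=> h; rewrite /nf ler_sqrt // ip_ge0. Qed.


Lemma ip_cols m n (X Y : 'M[R]_(m, n)) : ip X Y = \sum_j ip (col j X) (col j Y).
Proof.
rewrite /ip exchange_big; apply: eq_bigr => j _; apply: eq_bigr => i _.
by rewrite big_ord1 !mxE.
Qed.

Lemma ip_rows m n (X Y : 'M[R]_(m, n)) : ip X Y = \sum_i ip (row i X)^T (row i Y)^T.
Proof.
rewrite -ip_tr ip_cols; apply: eq_bigr => i _; by rewrite !tr_row.
Qed.

Definition contr m n (B : 'M[R]_(m, n)) c :=
  forall k (Z : 'M[R]_(n, k)), ip (B *m Z) (B *m Z) <= c * ip Z Z.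

Lemma contr_tr m n (B : 'M[R]_(m, n)) c : 0 <= c -> contr B c -> contr B^T c.
Proof.
move=> c0 h k W.
have e : ip (B^T *m W) (B^T *m W) = ip W (B *m (B^T *m W)) by rewrite ip_mull trmxK.
have h1 := ip_CS W (B *m (B^T *m W)); rewrite -e in h1.
have h2 := h _ (B^T *m W).
have x0 := ip_ge0 (B^T *m W); have w0 := ip_ge0 W.
move: h1 h2 x0 w0; set x := ip (B^T *m W) (B^T *m W); set y := ip (B *m _) _.
set w := ip W W => h1 h2 x0 w0.
have h3 : x ^+ 2 <= w * (c * x) by apply: (le_trans h1); rewrite ler_wpM2l.
rewrite mulrA (mulrC w) in h3.
have z0 : 0 <= c * w by rewrite mulr_ge0.
move: h3 z0; set z := c * w; nra.
Qed.

Lemma contr_cols m n (B : 'M[R]_(m, n)) c :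
  (forall z : 'cV[R]_n, ip (B *m z) (B *m z) <= c * ip z z) -> contr B c.
Proof.
move=> h k Z; rewrite [ip (B *m Z) _]ip_cols [ip Z Z]ip_cols mulr_sumr.
apply: ler_sum => j _; rewrite !colE -mulmxA; exact: h.
Qed.

Lemma contr_fro m n (B : 'M[R]_(m, n)) : contr B (ip B B).
Proof.
apply: contr_cols => z.
have e i : (B *m z) i 0 = ip (row i B)^T z.
  rewrite mxE /ip; apply: eq_bigr => k _; by rewrite big_ord1 !mxE.
rewrite [ip B B]ip_rows mulr_suml [ip (B *m z) _]/ip; apply: ler_sum => i _.
rewrite big_ord1 -expr2.
have -> : (ord0 : 'I_1) = 0 by [].
rewrite e; exact: ip_CS.
Qed.

Lemma ip_delta m n (i : 'I_m) (j : 'I_n) : ip (delta_mx i j : 'M[R]_(m, n)) (delta_mx i j) = 1.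
Proof.
rewrite /ip (bigD1 i) //= (bigD1 j) //= !mxE !eqxx mulr1.
rewrite [X in _ + X + _]big1 ?addr0; last first.
  by move=> l hl; rewrite !mxE (negPf hl) andbF mul0r.
rewrite big1 ?addr0 // => k hk; rewrite big1 // => l _; by rewrite !mxE (negPf hk) mul0r.
Qed.

Lemma eucl_nf n (v : 'cV[R]_n) : eucl v = nf v.
Proof.
rewrite /eucl /nf /ip; congr Num.sqrt; apply: eq_bigr => i _.
by rewrite big_ord1 expr2.
Qed.

Local Open Scope classical_set_scope.
Lemma opnorm_contr q r (A : 'M[R]_(q, r)) : (0 < r)%N ->
  0 <= opnorm A /\ contr A (opnorm A ^+ 2).
Proof.
move=> hr.
rewrite /opnorm; set S := (X in sup X).
have hub : has_ubound S.
  exists (Num.sqrt (ip A A)) => y [x hx <-].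
  rewrite eucl_nf /nf ler_sqrt ?ip_ge0 //.
  apply: (le_trans (contr_fro A (k:=1) x)).
  move: hx => /= ; rewrite eucl_nf => hx.
  by rewrite -(nf_sq x) hx expr1n mulr1.
have hle x : eucl x = 1 -> eucl (A *m x) <= sup S.
  move=> hx; apply: (ub_le_sup hub); by exists x.
set e : 'cV[R]_r := delta_mx (Ordinal hr) 0.
have he : eucl e = 1 by rewrite eucl_nf /nf ip_delta sqrtr1.
have a0 : 0 <= sup S.
  apply: le_trans (hle e he); rewrite eucl_nf; exact: nf_ge0.
split => //; apply: contr_cols => x.
have [x0|xn] := eqVneq (ip x x) 0.
  have := contr_fro A x; rewrite x0 !mulr0 //.
have xp : 0 < ip x x by rewrite lt_neqAle eq_sym xn ip_ge0.
set t := nf x.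
have tp : 0 < t by rewrite /t /nf sqrtr_gt0.
set x' := t^-1 *: x.
have hx' : eucl x' = 1.
  rewrite eucl_nf /nf /x' ipZl ipZr -nf_sq -/t.
  by rewrite mulrA -expr2 -exprMn mulVf ?gt_eqF // expr1n sqrtr1.
have h := hle _ hx'; rewrite eucl_nf in h.
have h2 : ip (A *m x') (A *m x') <= sup S ^+ 2.
  rewrite -nf_sq; have := nf_ge0 (A *m x'); move: h; set u := nf _; nra.
have e2 : ip (A *m x) (A *m x) = t ^+ 2 * ip (A *m x') (A *m x').
  rewrite /x' -scalemxAr ipZl ipZr mulrA; field; by rewrite gt_eqF.
rewrite e2 -(nf_sq x) -/t.
have := sqr_ge0 t; move: h2; set w := ip _ _; set a := sup S ^+ 2; nra.
Qed.

End IP.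


Section Cay.
Variable R : realType.

Lemma ip_eq0 m n (X : 'M[R]_(m, n)) : ip X X = 0 -> X = 0.
Proof.
move=> h; apply/matrixP => i j; rewrite mxE.
have h1 : forall i, \sum_j X i j * X i j = 0.
  move=> i'; apply: (psumr_eq0P _ h) => // i0 _; apply: sumr_ge0 => j0 _; by rewrite -expr2 sqr_ge0.
have h2 : X i j * X i j = 0.
  apply: (psumr_eq0P _ (h1 i)) => // j0 _; by rewrite -expr2 sqr_ge0.
by apply/eqP; rewrite -sqrf_eq0 expr2 h2.
Qed.

Lemma skew_unit n (X : 'M[R]_n) : X^T = - X -> (1%:M - X) \in unitmx.
Proof.
move=> hX; rewrite -row_free_unit -kermx_eq0 -submx0; apply/row_subP => i.
set u := row i _.
have hu : u *m (1%:M - X) = 0 by apply/sub_kermxP; exact: row_sub.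
rewrite mulmxBr mulmx1 in hu; move/eqP: hu; rewrite subr_eq0 => /eqP hu.
have h0 : ip u (u *m X) = 0.
  have e := ip_mulr X u u; rewrite hX mulmxN ipNr ipC in e.
  move: e; set z := ip u (u *m X) => e; lra.
rewrite submx0; apply/eqP; apply: ip_eq0; by rewrite {2}hu.
Qed.

Lemma ip_skew n k (X : 'M[R]_n) (N : 'M[R]_(n, k)) : X^T = - X ->
  ip N N <= ip ((1%:M - X) *m N) ((1%:M - X) *m N).
Proof.
move=> hX; rewrite mulmxBl mul1mx ip_sqrB.
have e := ip_mull X N N; rewrite hX mulNmx ipNr ipC in e.
move: e; set z := ip N (X *m N) => e.
have := ip_ge0 (X *m N); lra.
Qed.

Variables (q r : nat).
Implicit Types (A : 'M[R]_(q, r)).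

Lemma Xphi_skew A : (Xphi A)^T = - Xphi A.
Proof. by rewrite /Xphi tr_block_mx opp_block_mx !trmx0 !oppr0 opprK linearN /= trmxK. Qed.

Definition Ycay A := invmx (1%:M - Xphi A) *m Ipr R r q.

Lemma Ycay_eq A : (1%:M - Xphi A) *m Ycay A = Ipr R r q.
Proof. by rewrite /Ycay mulKVmx // skew_unit // Xphi_skew. Qed.

Lemma Ucay_eq A : Ucay A = Ycay A + Ycay A - Ipr R r q.
Proof.
rewrite /Ucay -mulmxA -/(Ycay A) -(Ycay_eq A).
have -> : 1%:M + Xphi A = 1%:M + 1%:M - (1%:M - Xphi A) by rewrite opprB [RHS]addrC addrA subrK addrC.
by rewrite mulmxBl mulmxDl mul1mx.
Qed.

Lemma Ipr_orth : (Ipr R r q)^T *m Ipr R r q = 1%:M.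
Proof. by rewrite /Ipr tr_col_mx mul_row_col trmx1 mul1mx trmx0 mul0mx addr0. Qed.

Lemma Ucay_orth A : (Ucay A)^T *m Ucay A = 1%:M.
Proof.
rewrite Ucay_eq; set Y := Ycay A; set I := Ipr R r q; set X := Xphi A.
have e1 : Y^T *m I = Y^T *m Y - Y^T *m (X *m Y).
  by rewrite /I -(Ycay_eq A) -/Y mulmxBl mul1mx mulmxBr.
have e2 : I^T *m Y = Y^T *m Y + Y^T *m (X *m Y).
  rewrite /I -(Ycay_eq A) -/Y trmx_mul linearB /= trmx1 Xphi_skew -/X opprK.
  by rewrite -mulmxA mulmxDl mul1mx mulmxDr.
rewrite !linearB !linearD /= !mulmxBl !mulmxDl e1 e2 Ipr_orth.
set W := Y^T *m Y; set Z := Y^T *m (X *m Y).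
have -> : W + W - (W + Z) = W - Z by rewrite opprD addrA addrK.
by rewrite opprB addrC subrK.
Qed.

Lemma Ucay_blocks A : exists Y1 : 'M[R]_r,
  Ucay A = col_mx (Y1 + Y1 - 1%:M) (A *m (Y1 + Y1)) /\
  (1%:M + A^T *m A) *m Y1 = 1%:M.
Proof.
have h := Ycay_eq A; set Y := Ycay A in h *.
exists (usubmx Y).
have eX : 1%:M - Xphi A = block_mx 1%:M A^T (- A) 1%:M.
  by rewrite [1%:M]scalar_mx_block /Xphi opp_block_mx add_block_mx !oppr0 !addr0 opprK !add0r.
rewrite eX -[Y]vsubmxK mul_block_col /Ipr !mul1mx in h; case/eq_col_mx: h => h1 h2.
have eY2 : dsubmx Y = A *m usubmx Y.
  by apply/eqP; rewrite -subr_eq0 addrC -mulNmx h2.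
rewrite eY2 in h1; split.
  rewrite Ucay_eq -/Y /Ipr mulmxDr -eY2 -[Y in LHS]vsubmxK add_col_mx opp_col_mx add_col_mx oppr0 addr0 //.
by rewrite mulmxDl mul1mx -mulmxA.
Qed.

Lemma T_sym (Y1 : 'M[R]_r) A : (1%:M + A^T *m A) *m Y1 = 1%:M ->
  (Y1 + Y1 - 1%:M)^T = Y1 + Y1 - 1%:M.
Proof.
move=> h; set G := 1%:M + A^T *m A in h.
have hG : G^T = G by rewrite /G linearD /= trmx1 trmx_mul trmxK.
have h' : Y1 *m G = 1%:M by apply: mulmx1C.
have eY : Y1^T = Y1.
  rewrite -[Y1^T]mulmx1 -h mulmxA -[Y1^T *m G]trmxK trmx_mul trmxK hG h trmx1.
  by rewrite mul1mx.
by rewrite linearB linearD /= eY trmx1.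
Qed.

Lemma T_quad (Y1 : 'M[R]_r) A c : (1%:M + A^T *m A) *m Y1 = 1%:M ->
  0 <= c -> contr A c -> forall k (N : 'M[R]_(r, k)),
  (1 - c) * ip N N <= (1 + c) * ip N ((Y1 + Y1 - 1%:M) *m N).
Proof.
move=> h c0 hc k N.
set Z := Y1 *m N; set W := A *m Z; set V := A^T *m W.
have eN : N = Z + V.
  by rewrite /V /W mulmxA -[Z in Z + _]mul1mx -mulmxDl /Z mulmxA h mul1mx.
have eT : (Y1 + Y1 - 1%:M) *m N = Z + Z - N by rewrite mulmxBl mulmxDl mul1mx.
have hNZ : ip N Z = ip Z Z + ip W W.
  by rewrite {1}eN ipDl /V ip_mull trmxK.
have hNN : ip N N = ip Z Z + 2 * ip W W + ip V V.
  by rewrite {1 2}eN ip_sqr ipC /V ip_mull trmxK.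
rewrite eT ipBr ipDr hNZ hNN.
have hv : ip W W <= c * ip Z Z := hc _ Z.
have hw : ip V V <= c * ip W W := contr_tr c0 hc W.
move: hv hw; set u := ip Z Z; set v := ip W W; set w := ip V V => hv hw.
nra.
Qed.
Lemma ip_col m1 m2 n (a c : 'M[R]_(m1, n)) (b d : 'M[R]_(m2, n)) :
  ip (col_mx a b) (col_mx c d) = ip a c + ip b d.
Proof. by rewrite !ipE tr_col_mx mul_row_col mxtraceD. Qed.

Lemma ip_row m n1 n2 (a c : 'M[R]_(m, n1)) (b d : 'M[R]_(m, n2)) :
  ip (row_mx a b) (row_mx c d) = ip a c + ip b d.
Proof. by rewrite -ip_tr !tr_row_mx ip_col !ip_tr. Qed.

Lemma Xphi_B A A0 : Xphi A - Xphi A0 = Xphi (A - A0).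
Proof.
by rewrite /Xphi opp_block_mx add_block_mx !oppr0 !addr0 linearB /= opprB opprK addrC.
Qed.

Lemma ip0 m n : ip (0 : 'M[R]_(m, n)) 0 = 0.
Proof. by rewrite ipE trmx0 mul0mx mxtrace0. Qed.

Lemma ip_Xphi A : ip (Xphi A) (Xphi A) = 2 * ip A A.
Proof.
rewrite /Xphi block_mxEv !ip_col !ip_row ipNl ipNr opprK ip_tr !ip0.
by rewrite add0r addr0 mulr_natl mulr2n.
Qed.

Lemma Ycay_contr A : contr (Ycay A) 1.
Proof.
move=> k Z; rewrite mul1r.
apply: (le_trans (ip_skew (Ycay A *m Z) (Xphi_skew A))).
by rewrite mulmxA Ycay_eq ip_mull mulmxA Ipr_orth mul1mx.
Qed.

Lemma Ucay_diff A A0 :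
  ip (Ucay A - Ucay A0) (Ucay A - Ucay A0) <= 8 * ip (A - A0) (A - A0).
Proof.
set D := Ycay A - Ycay A0.
have eU : Ucay A - Ucay A0 = D + D.
  by rewrite !Ucay_eq /D; apply/matrixP => i j; rewrite !mxE; ring.
have eD : (1%:M - Xphi A) *m D = (Xphi A - Xphi A0) *m Ycay A0.
  rewrite /D mulmxBr Ycay_eq -{1}(Ycay_eq A0) -mulmxBl.
  by congr (_ *m _); rewrite opprB addrC addrA subrK.
have h1 := ip_skew D (Xphi_skew A); rewrite eD -[X in _ <= X]ip_tr trmx_mul Xphi_B in h1.
have h2 := contr_tr ler01 (Ycay_contr A0) (Xphi (A - A0))^T.
rewrite ip_tr ip_Xphi mul1r in h2.
rewrite eU [ip (D + D) _]ip_sqr.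
have := ip_ge0 D; lra.
Qed.
End Cay.


Section SV.
Variable R : realType.

Lemma orth_contr m n (U : 'M[R]_(m, n)) : U^T *m U = 1%:M -> contr U 1.
Proof. by move=> h k Z; rewrite ip_mull mulmxA h mul1mx mul1r. Qed.

Lemma ip_diag n (d : 'rV[R]_n) : ip (diag_mx d) (diag_mx d) = \sum_i d 0 i ^+ 2.
Proof.
apply: eq_bigr => i _; rewrite (bigD1 i) //= big1 ?addr0.
  by rewrite !mxE eqxx mulr1n expr2.
by move=> j hj; rewrite !mxE eq_sym (negPf hj) mulr0n mul0r.
Qed.

Lemma sin_acos2 (x : R) : -1 <= x <= 1 -> sin (acos x) ^+ 2 = 1 - x ^+ 2.
Proof.
move=> hx; rewrite sin2cos2 acosK //; by rewrite in_itv /=.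
Qed.

Lemma ip1 n (M : 'M[R]_n) : ip 1%:M M = \tr M.
Proof. by rewrite ipE trmx1 mul1mx. Qed.

Lemma ip11 n : ip (1%:M : 'M[R]_n) 1%:M = n%:R.
Proof. by rewrite ip1 mxtrace1. Qed.

Variable n r : nat.
Variables (U V : 'M[R]_(n, r)) (s : 'I_r -> R) (P Q : 'M[R]_r).
Hypotheses (hU : U^T *m U = 1%:M) (hV : V^T *m V = 1%:M).
Hypotheses (hP : P^T *m P = 1%:M) (hQ : Q^T *m Q = 1%:M)
  (hM : U^T *m V = P *m diag_mx (\row_i s i) *m Q^T) (s0 : forall i, 0 <= s i).

Let D := diag_mx (\row_i s i).

Lemma s_le1 i : s i <= 1.
Proof.
set e : 'cV[R]_r := delta_mx i 0.
set w := V *m (Q *m e).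
have hw : ip w w = 1.
  by rewrite /w ip_mull mulmxA hV mul1mx ip_mull mulmxA hQ mul1mx ip_delta.
have hDe : D *m e = s i *: e.
  apply/matrixP => k j; rewrite mul_diag_mx !mxE.
  by case: (eqVneq k i) => [->|hk]; rewrite ?mulr1 ?mulr0.
have hUw : U^T *m w = s i *: (P *m e).
  rewrite /w mulmxA hM -!mulmxA [Q^T *m _]mulmxA hQ mul1mx mulmxA.
  by rewrite -[P *m D *m e]mulmxA hDe scalemxAr.
have h := contr_tr ler01 (orth_contr hU) w.
rewrite hUw ipZl ipZr ip_mull mulmxA hP mul1mx ip_delta hw !mul1r mulr1 in h.
have := s0 i; nra.
Qed.

Lemma sin_sum : sinThetaF s ^+ 2 = \sum_i (1 - s i ^+ 2).
Proof.
rewrite /sinThetaF sqr_sqrtr.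
  by apply: eq_bigr => i _; rewrite sin_acos2 // s_le1 andbT; apply: le_trans (s0 i); lra.
by apply: sumr_ge0 => i _; exact: sqr_ge0.
Qed.

Lemma sin_ge0 : 0 <= sinThetaF s.
Proof. exact: sqrtr_ge0. Qed.

Lemma ipM : ip (U^T *m V) (U^T *m V) = \sum_i s i ^+ 2.
Proof.
rewrite hM -/D -!mulmxA ip_mull mulmxA hP mul1mx ip_mulr trmxK -mulmxA hQ mulmx1 ip_diag.
by apply: eq_bigr => i _; rewrite mxE.
Qed.

Lemma trMO : \tr (U^T *m V *m (Q *m P^T)) = \sum_i s i.
Proof.
rewrite hM -/D !mulmxA -[_ *m Q^T *m Q]mulmxA hQ mulmx1 mxtrace_mulC mulmxA hP mul1mx.
by rewrite mxtrace_diag; apply: eq_bigr => i _; rewrite mxE.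
Qed.

Lemma sum_s2 : \sum_i (1 - s i ^+ 2) = r%:R - \sum_i s i ^+ 2.
Proof. by rewrite sumrB sumr_const card_ord. Qed.

Lemma ipUU : ip U U = r%:R.
Proof. by rewrite ipE hU mxtrace1. Qed.
Lemma ipVV : ip V V = r%:R.
Proof. by rewrite ipE hV mxtrace1. Qed.

Lemma part2_core : sinThetaF s ^+ 2 <= ip (U - V) (U - V).
Proof.
have h := ip_ge0 (1%:M - U^T *m V); rewrite ip_sqrB ip11 ip1 ipM in h.
rewrite sin_sum sum_s2 ip_sqrB ipUU ipVV ipE.
move: h; set t := \tr _; set z := \sum_i _; lra.
Qed.

Lemma O_orth : (Q *m P^T) *m (Q *m P^T)^T = 1%:M /\ (Q *m P^T)^T *m (Q *m P^T) = 1%:M.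
Proof.
have hPP : P *m P^T = 1%:M := mulmx1C hP.
have hQQ : Q *m Q^T = 1%:M := mulmx1C hQ.
rewrite trmx_mul trmxK; split.
  by rewrite mulmxA -[Q *m P^T *m P]mulmxA hP mulmx1 hQQ.
by rewrite mulmxA -[P *m Q^T *m Q]mulmxA hQ mulmx1 hPP.
Qed.

Lemma part1_core : ip (U - V *m (Q *m P^T)) (U - V *m (Q *m P^T)) <= 2 * sinThetaF s ^+ 2.
Proof.
have [hO _] := O_orth.
rewrite ip_sqrB [ip U (V *m _)]ipE mulmxA trMO ip_mulr -mulmxA hO mulmx1 ipUU ipVV sin_sum sum_s2.
have : \sum_i s i ^+ 2 <= \sum_i s i.
  apply: ler_sum => i _; have := s0 i; have := s_le1 i; nra.
lra.
Qed.

End SV.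


Section Fin.
Variable R : realType.

Lemma le_sq (x y : R) : 0 <= y -> x ^+ 2 <= y ^+ 2 -> x <= y.
Proof. move=> y0 h; nra. Qed.

Lemma psd_help (c u v : R) : 0 <= c -> c < 1 -> 0 <= u -> (1 - c) * u <= (1 + c) * (2 * v) -> 0 <= v.
Proof. move=> *; nra. Qed.

Lemma psd_help2 (c u v : R) : 0 <= c -> c < 1 -> 0 <= u -> (1 - c) * u <= (1 + c) * v -> 0 <= v.
Proof. move=> *; nra. Qed.

Lemma scalar_final (a m e1 e2 k d : R) : 0 <= a -> a < 1 -> 0 <= e1 -> 0 <= e2 -> 0 <= k ->
  0 <= d -> m <= e2 + a * k + a * e1 -> e1 ^+ 2 <= 2 * d ^+ 2 -> e2 ^+ 2 <= 2 * d ^+ 2 ->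
  (1 - a ^+ 2) * k ^+ 2 <= 2 * (1 + a ^+ 2) * (e1 * k) ->
  m <= Num.sqrt 2 * (1 + 32 * Num.sqrt 2 * (1 + a ^+ 2) ^+ 2 / (1 - a ^+ 2) ^+ 2) * d.
Proof.
move=> a0 a1 he1 he2 hk hd hm h1 h2 hK.
set s2 := Num.sqrt 2.
have s2sq : s2 ^+ 2 = 2 by rewrite sqr_sqrtr.
have s20 : 0 <= s2 by exact: sqrtr_ge0.
have s21 : 1 <= s2 by nra.
have hsd : 0 <= s2 * d by rewrite mulr_ge0.
rewrite -s2sq in h1 h2.
have e1le : e1 <= s2 * d by apply: le_sq => //; rewrite exprMn.
have e2le : e2 <= s2 * d by apply: le_sq => //; rewrite exprMn.
set c := a ^+ 2.
have c0 : 0 <= c by rewrite sqr_ge0.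
have c1 : c < 1 by rewrite /c; nra.
set t := (1 + c) / (1 - c).
have ht : t * (1 - c) = 1 + c by rewrite /t mulfVK // subr_eq0 gt_eqF.
have t1 : 1 <= t.
  have : 0 < 1 - c by lra.
  nra.
have kle : k <= 2 * t * e1.
  have [k0|kp] := eqVneq k 0; first by rewrite k0; nra.
  have kp' : 0 < k by rewrite lt_neqAle eq_sym kp hk.
  have : (1 - c) * k <= 2 * (1 + c) * e1.
    rewrite -(ler_pM2r kp').
    have -> : (1 - c) * k * k = (1 - a ^+ 2) * k ^+ 2 by rewrite /c expr2 mulrA.
    by have -> : 2 * (1 + c) * e1 * k = 2 * (1 + a ^+ 2) * (e1 * k) by rewrite /c mulrA.
  rewrite -ht; have : 0 < 1 - c by lra.
  nra.
have -> : 32 * s2 * (1 + a ^+ 2) ^+ 2 / (1 - a ^+ 2) ^+ 2 = 32 * s2 * t ^+ 2.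
  by rewrite /t /c expr_div_n [RHS]mulrA.
have hm' : m <= s2 * d + a * (2 * t * (s2 * d)) + a * (s2 * d).
  have t0 : 0 <= t by lra.
  have h3 : k <= 2 * t * (s2 * d) by apply: (le_trans kle); rewrite ler_wpM2l // mulr_ge0.
  have h4 : a * k <= a * (2 * t * (s2 * d)) by rewrite ler_wpM2l.
  have h5 : a * e1 <= a * (s2 * d) by rewrite ler_wpM2l.
  lra.
have h6 : a * (2 * t + 1) <= 32 * s2 * t ^+ 2.
  have : 3 * t <= 32 * s2 * t ^+ 2 by nra.
  nra.
have h7 : a * (2 * t + 1) * (s2 * d) <= 32 * s2 * t ^+ 2 * (s2 * d) by rewrite ler_wpM2r.
apply: (le_trans hm'); rewrite -[_ * (1 + _) * d]mulrA mulrDl mul1r.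
move: h7; set X := 32 * s2 * t ^+ 2; set Y := s2 * d => h7.
have -> : s2 * ((1 + X) * d) = Y + X * Y by rewrite /Y; ring.
lra.
Qed.

Lemma eucl_vecm m n (M : 'M[R]_(m, n)) : eucl (vecm M) = nf M.
Proof.
rewrite /eucl /nf -ip_tr /ip; congr Num.sqrt.
rewrite (reindex _ (curry_mxvec_bij _ _)) /= pair_bigA; apply: eq_bigr => [[i j]] _ /=.
by rewrite /vecm mxE mxvecE expr2.
Qed.

Lemma vecmB m n (M N : 'M[R]_(m, n)) : vecm M - vecm N = vecm (M - N).
Proof. by rewrite /vecm !linearB. Qed.

Lemma nfN m n (X : 'M[R]_(m, n)) : nf (- X) = nf X.
Proof. by rewrite /nf ipNl ipNr opprK. Qed.

Lemma quadK n (S O : 'M[R]_n) : S^T = S -> O *m O^T = 1%:M ->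
  ip (1%:M - O) (S *m (1%:M - O)) = 2 * ip S (1%:M - O).
Proof.
move=> hS hO; rewrite ipC ip_mulr linearB /= trmx1 mulmxBr mulmx1 mulmxBl mul1mx hO.
have e : ip S O^T = ip S O by rewrite -{1}hS ip_tr.
rewrite !ipBr e; ring.
Qed.

Lemma hMm_gen q r (A A0 : 'M[R]_(q, r)) (T T0 O : 'M[R]_r) :
  (A - A0) *m (1%:M + T) =
  (A *m (1%:M + T) - A0 *m (1%:M + T0) *m O) - A0 *m (1%:M - O) - A0 *m (T - T0 *m O).
Proof.
rewrite mulmxBl !mulmxDr !mulmxN !mulmx1 !mulmxDl ?mul1mx ?mulNmx !mulmxA.
apply/matrixP => i j; rewrite !mxE. ring.
Qed.

Lemma zmod_id m n (a1 a0 x y z : 'M[R]_(m, n)) :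
  a1 - (a0 + z) = a1 - (x + y) - (a0 - x) - (z - y).
Proof. apply/matrixP => i j; rewrite !mxE; ring. Qed.

Lemma contr_nf m n k (B : 'M[R]_(m, n)) a (X : 'M[R]_(n, k)) : 0 <= a ->
  contr B (a ^+ 2) -> nf (B *m X) <= a * nf X.
Proof.
move=> a0 h; rewrite /nf -(ger0_norm a0) -sqrtr_sqr -sqrtrM ?sqr_ge0 //.
by rewrite ler_sqrt ?mulr_ge0 ?sqr_ge0 ?ip_ge0.
Qed.

End Fin.

Unset Implicit Arguments.

Theorem corollary1 (R : realType) (r q : nat) (hr : (0 < r)%N) :
  (forall (A A0 : 'M[R]_(q, r)) (s : 'I_r -> R),
     opnorm A < 1 -> opnorm A0 < 1 ->
     is_singular_values ((Ucay A)^T *m Ucay A0) s ->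
     sinThetaF s <= (1 - opnorm A0 ^+ 2) ^+ 2 / (8 * (1 + opnorm A0 ^+ 2) ^+ 2) ->
     eucl (vecm A - vecm A0) <=
       Num.sqrt 2 * (1 + 32 * Num.sqrt 2 * (1 + opnorm A0 ^+ 2) ^+ 2
                          / (1 - opnorm A0 ^+ 2) ^+ 2) * sinThetaF s) /\
  (forall (A A0 : 'M[R]_(q, r)) (s : 'I_r -> R),
     opnorm A < 1 -> opnorm A0 < 1 ->
     is_singular_values ((Ucay A)^T *m Ucay A0) s ->
     sinThetaF s <= 4 * eucl (vecm A - vecm A0)).
Proof.
split; last first.
  move=> A A0 s _ _ [s0 [_ [P [Q [hP [hQ hM]]]]]].
  have h1 := part2_core (Ucay_orth A) (Ucay_orth A0) hP hQ hM s0.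
  have h2 := Ucay_diff A A0.
  rewrite vecmB eucl_vecm; apply: le_sq; first by rewrite mulr_ge0 ?nf_ge0.
  rewrite exprMn nf_sq; have := ip_ge0 (A - A0); lra.
move=> A A0 s hA hA0 [s0 [_ [P [Q [hP [hQ hM]]]]]] _.
have hU := Ucay_orth A; have hV := Ucay_orth A0.
have [cA hcA] := opnorm_contr A hr; have [a0 hc0] := opnorm_contr A0 hr.
have [Y1 [eU hY1]] := Ucay_blocks A; have [Y0 [eV hY0]] := Ucay_blocks A0.
have hTs := T_sym hY1; have hT0s := T_sym hY0.
have hTq := T_quad hY1 (sqr_ge0 _) hcA.
have hT0q := T_quad hY0 (sqr_ge0 _) hc0.
set T := Y1 + Y1 - 1%:M in hTs hTq eU; set T0 := Y0 + Y0 - 1%:M in hT0s hT0q eV.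
have e1T : Y1 + Y1 = 1%:M + T by rewrite /T [RHS]addrC subrK.
have e1T0 : Y0 + Y0 = 1%:M + T0 by rewrite /T0 [RHS]addrC subrK.
rewrite e1T in eU; rewrite e1T0 in eV.
have [hO hO'] := O_orth hP hQ.
have hcore := part1_core hU hV hP hQ hM s0.
set O := Q *m P^T in hO hO' hcore.
set E1 := T - T0 *m O; set E2 := A *m (1%:M + T) - A0 *m (1%:M + T0) *m O.
have hE : Ucay A - Ucay A0 *m O = col_mx E1 E2.
  by rewrite eU eV mul_col_mx opp_col_mx add_col_mx.
rewrite hE ip_col in hcore.
set K := 1%:M - O.
set a := opnorm A0.
have cA1 : opnorm A ^+ 2 < 1 by have := hA; nra.
have TK : 0 <= ip T K.
  have h := hTq _ K; rewrite quadK // in h.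
  exact: (psd_help (sqr_ge0 _) cA1 (ip_ge0 K) h).
have hT0O : T0 *m O = T - E1 by rewrite /E1 opprB addrC subrK.
have e1 : ip T0 O = ip (T - E1) 1%:M.
  transitivity (ip T0^T O^T); first by rewrite ip_tr.
  by rewrite hT0s -hT0O ip_mulr mul1mx.
have eT0 : T0 = (T - E1) *m O^T by rewrite -hT0O -mulmxA hO mulmx1.
have e2 : ip T0 1%:M = ip (T - E1) O by rewrite {1}eT0 ip_mulr mul1mx trmxK.
have key : ip T0 K = - ip T K + ip E1 K.
  by rewrite /K !ipBr e1 e2 !ipBl; ring.
have hK : (1 - a ^+ 2) * nf K ^+ 2 <= 2 * (1 + a ^+ 2) * (nf E1 * nf K).
  have h := hT0q _ K; rewrite quadK // key in h.
  rewrite nf_sq; apply: (le_trans h).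
  have := ip_le_nf E1 K; have : 0 <= 1 + a ^+ 2 by rewrite addr_ge0 ?sqr_ge0.
  move: TK; set u := ip T K; set v := ip E1 K; set w := nf E1 * nf K; set c := 1 + a ^+ 2.
  nra.
set Mm := A - A0.
have hMm : Mm *m (1%:M + T) = E2 - A0 *m K - A0 *m E1.
  exact: hMm_gen.
have hM1 : nf Mm <= nf (Mm *m (1%:M + T)).
  apply: nf_le; rewrite mulmxDr mulmx1 [ip (Mm + _) _]ip_sqr.
  have h := hTq _ Mm^T.
  have e : ip Mm^T (T *m Mm^T) = ip Mm (Mm *m T).
    by rewrite -ip_tr trmx_mul trmxK hTs.
  rewrite e in h.
  have v0 := psd_help2 (sqr_ge0 _) cA1 (ip_ge0 _) h.
  have := ip_ge0 (Mm *m T); lra.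
have hM2 : nf Mm <= nf E2 + a * nf K + a * nf E1.
  apply: (le_trans hM1); rewrite hMm.
  apply: (le_trans (nf_triangle _ _)); rewrite nfN.
  apply: lerD; last exact: contr_nf.
  apply: (le_trans (nf_triangle _ _)); rewrite nfN.
  by apply: lerD => //; exact: contr_nf.
rewrite vecmB eucl_vecm -/Mm.
apply: (scalar_final a0 hA0 (nf_ge0 _) (nf_ge0 _) (nf_ge0 _) (sin_ge0 _) hM2) => //.
- rewrite nf_sq; have := ip_ge0 E2; lra.
- rewrite nf_sq; have := ip_ge0 E1; lra.
Qed.
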